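(* Consider the PDP-TSLU feasible set described in the context. For each pair of pickup tasks with $i\in P^{4},\ j\in P^{1}$, or $i\in P^{3},\ j\in P^{2}$, every feasible solution of the PDP-TSLU satisfies \[ x_{ij}+x_{ji}+x_{i,i+n}+x_{i+n,j+n}\le 1, \] where any variable $x_{uv}$ whose arc $(u,v)$ is not in the arc set $A$ is taken to be $0$.
   Context: Data. Let $n\ge1$, $P=\{1,\dots,n\}$ (pickup tasks), $D=\{n+1,\dots,2n\}$ (delivery tasks; task $i+n$ is the delivery paired with pickup $i$), $V'=P\cup D$, $V=\{0\}\cup V'\cup\{2n+1\}$ ($0$ and $2n+1$ are virtual start and end tasks). Each $i\in V'$ has a side indicator $a_i\in\{0,1\}$. Define $P^{1}=\{i\in P:a_i=a_{i+n}=0\}$, $P^{2}=\{i\in P:a_i=a_{i+n}=1\}$, $P^{3}=\{i\in P:a_i=0,a_{i+n}=1\}$, $P^{4}=\{i\in P:a_i=1,a_{i+n}=0\}$. The pickup tasks are partitioned into FIFO queues (one per station); for pickups $k,j$ in the same queue, $k\lhd j$ (equivalently $j\rhd k$) means $k$ is queued ahead of $j$, and $i\oplus1$ denotes the pickup queued immediately behind $i$ in its queue (if any). Given are an integer capacity $Q\ge1$, loads $q_i>0$ and $q_{i+n}=-q_i$ for $i\in P$, durations $s_i\ge0$ for $i\in V\setminus\{2n+1\}$ with $s_0=0$, windows $[e_i,l_i]$ for $i\in P$, and travel times $t_{ij}\ge0$. Arc set. For $i\in P$ let $S^{i}_{P,1}=\{j\in P:j\lhd i\}$, $S^{i}_{P,2}=\{j\in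 P:j\rhd i\oplus1\}$, $S^{i}_{P,3}=P^{3}$ if $i\in P^{1}\cup P^{4}$ (else $\emptyset$), $S^{i}_{P,4}=P^{4}$ if $i\in P^{2}\cup P^{3}$ (else $\emptyset$), $S^{i}_{D,1}=\{j\in D:j-n\rhd i\}$, $S^{i}_{D,2}=\{j\in D:j-n\in P^{1}\cup P^{4}\setminus\{i\}\}$ if $i\in P^{1}\cup P^{3}$ (else $\emptyset$), $S^{i}_{D,3}=\{j\in D:j-n\in P^{2}\cup P^{3}\setminus\{i\}\}$ if $i\in P^{2}\cup P^{4}$ (else $\emptyset$). For $i\in D$ let $S^{i}_{P,5}=\{j\in P:j\lhd i-n\}$; $S^{i}_{P,6}=\{j\in P:\exists k\in P^{3},\ i-n\lhd k\lhd j\}$ if $i-n\in P^{1}$ (else $\emptyset$); $S^{i}_{P,7}=\{j\in P:\exists k\in P^{4},\ i-n\lhd k\lhd j\}$ if $i-n\in P^{2}$ (else $\emptyset$); $S^{i}_{P,8}=\{j\in P:|\{k\in P^{3}:i-n\lhd k\lhd j\}|\ge Q\}$ if $i-n\in P^{3}$ (else $\emptyset$); $S^{i}_{P,9}=\{j\in P:|\{k\in P^{4}:i-n\lhd k\lhd j\}|\ge Q\}$ if $i-n\in P^{4}$ (else $\emptyset$); $S^{i}_{D,4}=\{j\in D:j-n\rhd i-n\}$ if $i-n\in P^{1}\cup P^{2}$ (else $\emptyset$); $S^{i}_{D,5}=\{j\in D:j-n\lhd i-n\}$ if $i-n\in P^{3}\cup P^{4}$ (else $\emptyset$); $S^{i}_{D,6}=\{j\in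 D:j-n\in S^{i}_{P,8}\cup S^{i}_{P,9}\}$; $S^{i}_{D,7}=\{j\in D:j-n\in P^{2}\cup P^{4}\}$ if $i-n\in P^{3}$ (else $\emptyset$); $S^{i}_{D,8}=\{j\in D:j-n\in P^{1}\cup P^{3}\}$ if $i-n\in P^{4}$ (else $\emptyset$). The arc set is $A=\{(0,j):j\in P,\ \nexists k\lhd j\}\cup\{(i,2n+1):i\in D,\ \nexists k\rhd i-n\}\cup\{(i,j):i\in P,\ j\in V'\setminus(\cup_{l=1}^{4}S^{i}_{P,l}\cup\cup_{l=1}^{3}S^{i}_{D,l})\}\cup\{(i,j):i\in D,\ j\in V'\setminus(\cup_{l=5}^{9}S^{i}_{P,l}\cup\cup_{l=4}^{8}S^{i}_{D,l})\}$, minus all $(i,j)$ with $i,j\in V'$ and $i=j$ or $i=j+n$. Let $A'=\{(i,j)\in A:i,j\in V'\}$. Feasible solutions of the PDP-TSLU. Variables: $x_{ij}\in\{0,1\}$ for $(i,j)\in A$; $y^{k}_{ij}\in\{0,1\}$ for $(i,j)\in A'$, $k\in P$; reals $b_i\ge0$ ($b_0=0$) and $w_i\ge0$ ($w_0=0$). Constraints: (i) $\sum_{j:(i,j)\in A}x_{ij}=1$ for $i\in V\setminus\{2n+1\}$ and $\sum_{j:(j,i)\in A}x_{ji}=1$ for $i\in V\setminus\{0\}$; (ii) $b_{i+n}\ge b_i+s_i+t_{i,i+n}$ for $i\in P$; (iii) $b_{i\oplus1}\ge b_i+s_i$ whenever $i\oplus1$ exists; (iv) for $(i,j)\in A$ with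 $j\in V'\cup\{2n+1\}$, $x_{ij}=1\Rightarrow b_j\ge b_i+s_i+t_{ij}$, and for $(i,j)\in A$ with $j\in V'$, $x_{ij}=1\Rightarrow w_j\ge w_i+q_j$; (v) $e_i\le b_{i+n}+s_{i+n}\le l_i$ for $i\in P$; (vi) $\max\{0,q_i\}\le w_i\le\min\{Q,Q+q_i\}$ for $i\in V'$; (vii) for all $i\in V'$, $k\in P$: $\sum_{j:(i,j)\in A'}y^k_{ij}-\sum_{j:(j,i)\in A'}y^k_{ji}$ equals $1$ if $i=k$, $-1$ if $i=k+n$, $0$ otherwise; (viii) writing $Y^k(v)=\sum_{u:(u,v)\in A'}y^k_{uv}$: $Y^k(j)=Y^k(j+n)$ for $j\in P^{1}\setminus\{k\},k\in P^{1}$ and for $j\in P^{2}\setminus\{k\},k\in P^{2}$; $Y^k(j)+Y^k(j+n)\le1$ for $j\in P^{3}\setminus\{k\},k\in P^{3}$ and for $j\in P^{4}\setminus\{k\},k\in P^{4}$; $y^k_{uj}=0$ for all $(u,j)\in A'$ when ($j\in P^{3},k\in P^{1}$) or ($j\in P^{4},k\in P^{2}$) or ($j\in P^{4},k\in P^{3}$) or ($j\in P^{3},k\in P^{4}$); $y^k_{u,j+n}=0$ for all $(u,j+n)\in A'$ when ($j\in P^{4},k\in P^{1}$) or ($j\in P^{3},k\in P^{2}$); (ix) $y^k_{ij}\le x_{ij}$ for $(i,j)\in A'$, $k\in P$. *)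

(* Defs.v *)
From HB Require Import structures.
From mathcomp Require Import all_boot all_order all_algebra.
Set Implicit Arguments. Unset Strict Implicit. Unset Printing Implicit Defensive.
Import Order.TTheory GRing.Theory Num.Theory.

(* Tasks are natural numbers: 0 = virtual start, 1..n = pickups P,
   n+1..2n = deliveries D (i+n is the delivery of pickup i), 2n+1 = virtual end.
   FIFO queues: [queues : seq (seq nat)], each inner list is one station's
   queue listed from front to back; it is required to partition P. *)

Section Model.
Variables (n : nat) (a : nat -> bool) (queues : seq (seq nat)) (Q : nat).

Definition isP i := (1 <= i <= n)%N.
Definition isD i := (n < i <= n + n)%N.
Definition isV' i := (1 <= i <= n + n)%N.

Definition P1 i := isP i && ~~ a i && ~~ a (i + n).
Definition P2 i := isP i && a i && a (i + n).
Definition P3 i := isP i && ~~ a i && a (i + n).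
Definition P4 i := isP i && a i && ~~ a (i + n).

Definition prec (k j : nat) : bool :=
  has (fun qu => [&& k \in qu, j \in qu & (index k qu < index j qu)%N]) queues.

Definition next_of (i : nat) : option nat :=
  let qs := [seq qu <- queues | i \in qu] in
  match qs with
  | qu :: _ => if ((index i qu).+1 < size qu)%N
               then Some (nth 0%N qu (index i qu).+1) else None
  | [::] => None
  end.

Definition SP1 i j := isP j && prec j i.
Definition SP2 i j := isP j && (if next_of i is Some m then prec m j else false).
Definition SP3 i j := (P1 i || P4 i) && P3 j.
Definition SP4 i j := (P2 i || P3 i) && P4 j.
Definition SD1 i j := isD j && prec i (j - n).
Definition SD2 i j := (P1 i || P3 i) && isD j && (P1 (j - n) || P4 (j - n)) && (j - n != i).
Definition SD3 i j := (P2 i || P4 i) && isD j && (P2 (j - n) || P3 (j - n)) && (j - n != i).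

Definition SP5 i j := isP j && prec j (i - n).
Definition SP6 i j := P1 (i - n) && isP j &&
  has (fun k => [&& P3 k, prec (i - n) k & prec k j]) (iota 1 n).
Definition SP7 i j := P2 (i - n) && isP j &&
  has (fun k => [&& P4 k, prec (i - n) k & prec k j]) (iota 1 n).
Definition SP8 i j := P3 (i - n) && isP j &&
  (Q <= count (fun k => [&& P3 k, prec (i - n) k & prec k j]) (iota 1 n))%N.
Definition SP9 i j := P4 (i - n) && isP j &&
  (Q <= count (fun k => [&& P4 k, prec (i - n) k & prec k j]) (iota 1 n))%N.
Definition SD4 i j := (P1 (i - n) || P2 (i - n)) && isD j && prec (i - n) (j - n).
Definition SD5 i j := (P3 (i - n) || P4 (i - n)) && isD j && prec (j - n) (i - n).
Definition SD6 i j := isD j && (SP8 i (j - n) || SP9 i (j - n)).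
Definition SD7 i j := P3 (i - n) && isD j && (P2 (j - n) || P4 (j - n)).
Definition SD8 i j := P4 (i - n) && isD j && (P1 (j - n) || P3 (j - n)).

Definition arc (i j : nat) : bool :=
  [|| [&& i == 0%N, isP j & ~~ has (fun k => prec k j) (iota 1 n)],
      [&& j == (n + n).+1, isD i & ~~ has (fun k => prec (i - n) k) (iota 1 n)],
      [&& isP i, isV' j, j != i, i != j + n &
          ~~ [|| SP1 i j, SP2 i j, SP3 i j, SP4 i j, SD1 i j, SD2 i j | SD3 i j]]
    | [&& isD i, isV' j, j != i, i != j + n &
          ~~ [|| SP5 i j, SP6 i j, SP7 i j, SP8 i j, SP9 i j,
                 SD4 i j, SD5 i j, SD6 i j, SD7 i j | SD8 i j]]].

Definition arc' (i j : nat) : bool := [&& arc i j, isV' i & isV' j].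

End Model.

Definition xA n a queues Q (x : nat -> nat -> bool) (i j : nat) : nat :=
  arc n a queues Q i j && x i j.

Definition Yin n a queues Q (y : nat -> nat -> nat -> bool) (k v : nat) : nat :=
  (\sum_(u < (n + n).+2 | arc' n a queues Q u v) y k u v)%N.

Local Open Scope ring_scope.

Definition feasible (R : realFieldType) (n : nat) (a : nat -> bool)
  (queues : seq (seq nat)) (Q : nat)
  (q s e l : nat -> R) (t : nat -> nat -> R)
  (x : nat -> nat -> bool) (y : nat -> nat -> nat -> bool)
  (b w : nat -> R) : Prop :=
  let A := arc n a queues Q in
  let A' := arc' n a queues Q in
  let P1 := P1 n a in let P2 := P2 n a in let P3 := P3 n a in let P4 := P4 n a in
  let Y := Yin n a queues Q y in
  b 0%N = 0 /\ w 0%N = 0 /\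
  (forall i, (i <= (n + n).+1)%N -> 0 <= b i) /\
  (forall i, (i <= (n + n).+1)%N -> 0 <= w i) /\
  (forall i, (i <= n + n)%N ->
     (\sum_(j < (n + n).+2 | A i j) (x i j : nat))%N = 1%N) /\
  (forall i, (1 <= i <= (n + n).+1)%N ->
     (\sum_(j < (n + n).+2 | A j i) (x j i : nat))%N = 1%N) /\
  (forall i, isP n i -> b (i + n)%N >= b i + s i + t i (i + n)%N) /\
  (forall i m, isP n i -> next_of queues i = Some m -> b m >= b i + s i) /\
  (forall i j, A i j -> x i j -> (1 <= j <= (n + n).+1)%N ->
     b j >= b i + s i + t i j) /\
  (forall i j, A i j -> x i j -> isV' n j -> w j >= w i + q j) /\
  (forall i, isP n i -> e i <= b (i + n)%N + s (i + n)%N <= l i) /\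
  (forall i, isV' n i ->
     Num.max 0 (q i) <= w i <= Num.min (Q%:R) (Q%:R + q i)) /\
  (forall i k, isV' n i -> isP n k ->
     ((\sum_(j < (n + n).+2 | A' i j) (y k i j : nat))%:Z
      - (\sum_(j < (n + n).+2 | A' j i) (y k j i : nat))%:Z
      = (if i == k then 1 else if i == (k + n)%N then -1 else 0))%R) /\
  (forall k j, P1 k -> P1 j -> j != k -> Y k j = Y k (j + n)%N) /\
  (forall k j, P2 k -> P2 j -> j != k -> Y k j = Y k (j + n)%N) /\
  (forall k j, P3 k -> P3 j -> j != k -> (Y k j + Y k (j + n) <= 1)%N) /\
  (forall k j, P4 k -> P4 j -> j != k -> (Y k j + Y k (j + n) <= 1)%N) /\
  (forall k j u, A' u j ->
     [|| P3 j && P1 k, P4 j && P2 k, P4 j && P3 k | P3 j && P4 k] ->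
     y k u j = false) /\
  (forall k j u, A' u (j + n)%N ->
     (P4 j && P1 k) || (P3 j && P2 k) -> y k u (j + n)%N = false) /\
  (forall i j k, A' i j -> isP n k -> y k i j -> x i j).

(* Main.v *)
Require Import Defs.
From HB Require Import structures.
From mathcomp Require Import all_boot all_order all_algebra.
From mathcomp Require Import zify ring lra.
Import Order.TTheory GRing.Theory Num.Theory.
Local Open Scope ring_scope.

Lemma sum2 (m : nat) (P : pred 'I_m) (F : 'I_m -> nat) (u v : 'I_m) :
  u != v -> P u -> P v -> (F u + F v <= \sum_(k | P k) F k)%N.
Proof.
move=> uv Pu Pv; rewrite (bigD1 u) //= (bigD1 v) /=; last by rewrite Pv eq_sym.
by rewrite addnA leq_addr.
Qed.

Lemma sum1 (m : nat) (P : pred 'I_m) (F : 'I_m -> nat) (u : 'I_m) :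
  P u -> (F u <= \sum_(k | P k) F k)%N.
Proof. by move=> Pu; rewrite (bigD1 u) //= leq_addr. Qed.

Lemma sum_pos (m : nat) (P : pred 'I_m) (F : 'I_m -> bool) :
  (0 < \sum_(k | P k) (F k : nat))%N -> exists k : 'I_m, P k && F k.
Proof.
case: (boolP [exists k, P k && F k]) => [/existsP//|/existsP nE].
rewrite big1 // => k Pk; case Fk: (F k) => //; exfalso; apply: nE.
by exists k; rewrite Pk Fk.
Qed.

Lemma arc_range (n : nat) (a : nat -> bool) (queues : seq (seq nat)) (Q i j : nat) : Defs.arc n a queues Q i j -> (j <= (n + n).+1)%N.
Proof.
rewrite /Defs.arc /isP /isV' /isD.
case/or4P => /and3P [] //.
- move=> _ /andP [_ h] _; lia.
- by move=> /eqP -> _ _.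
- move=> _ /andP [_ h] _; lia.
- move=> _ /andP [_ h] _; lia.
Qed.

Lemma natfacts (n i j : nat) : isP n i -> isP n j ->
  isV' n i /\ isV' n j /\ (j <= n + n)%N /\ (i <= n + n)%N /\ (n < j + n)%N /\
   (j + n <= n + n)%N /\ ((i + n == 0)%N = false) /\ ((j + n == (n + n).+1)%N = false) /\
   ((i + n <= n)%N = false) /\ (j != i + n)%N /\ (i != j + n)%N.
Proof.
rewrite /isP /isV' => ??; do 10 (split; first (try apply/negbTE; try apply/negP; lia)).
apply/negP; lia.
Qed.

Lemma int1 (o m : nat) : (o%:Z - m%:Z = 1 :> int)%R -> (0 < o)%N.
Proof. lia. Qed.
Lemma int0 (o m : nat) : (o%:Z - m%:Z = 0 :> int)%R -> o = m.
Proof. lia. Qed.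

Lemma arc'_arc n a queues Q u v : arc' n a queues Q u v -> Defs.arc n a queues Q u v.
Proof. by case/and3P. Qed.

Theorem proposition2 (R : realFieldType) (n : nat) (a : nat -> bool)
  (queues : seq (seq nat)) (Q : nat)
  (q s e l : nat -> R) (t : nat -> nat -> R)
  (x : nat -> nat -> bool) (y : nat -> nat -> nat -> bool) (b w : nat -> R) :
  (1 <= n)%N -> (1 <= Q)%N ->
  perm_eq (flatten queues) (iota 1 n) ->
  (forall i, isP n i -> 0 < q i) ->
  (forall i, isP n i -> q (i + n)%N = - q i) ->
  (forall i, (i <= n + n)%N -> 0 <= s i) -> s 0%N = 0 ->
  (forall i j, 0 <= t i j) ->
  @feasible R n a queues Q q s e l t x y b w ->
  forall i j, (P4 n a i && P1 n a j) || (P3 n a i && P2 n a j) ->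
    (xA n a queues Q x i j + xA n a queues Q x j i
     + xA n a queues Q x i (i + n) + xA n a queues Q x (i + n) (j + n) <= 1)%N.
Proof.
move=> n1 Q1 _ qpos _ _ _ _ F i j H.
case: F => b0 [w0 [bnn [wnn [outd [ind [Hii [Hiii [Hb [Hw [Hv [Hvi [Hvii
  [H81 [H82 [H83 [H84 [H85 [H86 Hix]]]]]]]]]]]]]]]]]].
have [iP jP ij] : [/\ isP n i, isP n j & a i != a j].
  by move: H; rewrite /P1 /P2 /P3 /P4; case/orP => /andP [] /andP [] /andP [] -> ai _ /andP [] /andP [] -> aj _;
    move: ai aj; case: (a i); case: (a j).
set A := Defs.arc n a queues Q.
have [iV [jV [jn [in_ [b1 [b2 [b3 [b4 [b5 [jin ijn]]]]]]]]]] := @natfacts n i j iP jP.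
have ineqj : i != j by apply: contra ij => /eqP ->.
have uniq : forall u v v', (u <= n + n)%N -> A u v -> A u v' -> x u v -> x u v' -> v = v'.
  move=> u v v' un Av Av' xv xv'; apply/eqP; apply/negPn/negP => vv.
  have := outd u un.
  have hv := @arc_range _ _ _ _ _ _ Av; have hv' := @arc_range _ _ _ _ _ _ Av'.
  have := @sum2 _ (fun k : 'I_(n + n).+2 => A u k) (fun k : 'I_(n + n).+2 => (x u k : nat))
    (Ordinal (hv : (v < (n + n).+2)%N)) (Ordinal (hv' : (v' < (n + n).+2)%N)) vv Av Av'.
  rewrite /= xv xv' => h E; by rewrite E in h.
have X4 : A (i + n)%N (j + n)%N = false.
  rewrite /A /Defs.arc /SD7 /SD8 /isD /isP !addnK b1 b2 b3 b4 b5 /= !andbF /=.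
  case/orP: H => /andP [h1 h2]; by rewrite h1 h2 orbT ?orbT /= !andbF.
have no12 : ~~ [&& A i j, x i j, A j i & x j i].
  apply/negP => /and4P [Aij xij Aji xji]. 
  have w1 := Hw _ _ Aij xij jV; have w2 := Hw _ _ Aji xji iV.
  have q1 := qpos _ iP; have q2 := qpos _ jP; lra.
have no13 : ~~ [&& A i j, x i j, A i (i + n)%N & x i (i + n)%N].
  apply/negP => /and4P [Aij xij Aii xii].
  have := uniq _ _ _ in_ Aij Aii xij xii; by move/eqP: jin.
have no23 : ~~ [&& A j i, x j i, A i (i + n)%N & x i (i + n)%N].
  apply/negP => /and4P [Aji xji Aii xii].
  have E1 := Hvii j j jV jP; rewrite eqxx in E1.
  have [v /andP [A'v yv]] := @sum_pos _ _ (fun v => y j j v) (@int1 _ _ E1).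
  have xv := Hix _ _ _ A'v jP yv.
  have vi := uniq _ _ _ jn (@arc'_arc _ _ _ _ _ _ A'v) Aji xv xji.
  have jlt : (j < (n + n).+2)%N by rewrite ltnS leqW.
  have E2 := Hvii i j iV jP; rewrite (negbTE ineqj) (negbTE ijn) in E2.
  have {}E2 := @int0 _ _ E2.
  have h1 := @sum1 _ (fun u : 'I_(n + n).+2 => arc' n a queues Q u i) (fun u => (y j u i : nat)) (Ordinal jlt).
  move: A'v yv; rewrite vi => A'v yv.
  rewrite /= A'v yv -E2 in h1.
  have [v2 /andP [A'v2 yv2]] := @sum_pos _ _ (fun v => y j i v) (h1 isT).
  have xv2 := Hix _ _ _ A'v2 jP yv2.
  have v2i := uniq _ _ _ in_ (@arc'_arc _ _ _ _ _ _ A'v2) Aii xv2 xii.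
  by move: (H86 j i i); rewrite -v2i A'v2 H yv2 => /(_ isT isT).
rewrite /xA -/A X4 /=.
move: no12 no13 no23.
by case: (A i j); case: (x i j); case: (A j i); case: (x j i); case: (A i (i+n)%N); case: (x i (i+n)%N).
Qed.
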